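(* For each $k\ge 1$: if $k$ is odd, then $\Sigma^1_k\text{-}\mathrm{KROM}^r\equiv\Sigma^1_{k+1}\text{-}\mathrm{KROM}^r$; if $k$ is even, then $\Pi^1_k\text{-}\mathrm{KROM}^r\equiv\Pi^1_{k+1}\text{-}\mathrm{KROM}^r$ (equivalence on all finite structures).
   Context: All structures are finite; every vocabulary contains equality. For a vocabulary $\tau$, an SO-KROM$^r(\tau)$ formula is a second-order formula of the form $Q_1R_1\cdots Q_mR_m\forall\bar{x}(C_1\wedge\cdots\wedge C_n)$, where each $Q_i\in\{\forall,\exists\}$, $R_1,\dots,R_m$ are second-order relation variables, and each clause $C_j$ is a disjunction $\beta_1\vee\cdots\vee\beta_q\vee H_1\vee H_2$ in which each $\beta_s$ is an atomic or negated atomic $\tau$-formula ($P\bar{y}$ or $\neg P\bar{y}$, $P\in\tau$, including equality), and each $H_t$ is one of $R_i\bar{z}$, $\neg R_i\bar{z}$, $\exists z_1\cdots\exists z_{r}R_i z_1\dots z_r$ ($r$ the arity of $R_i$), or $\bot$. $\Sigma^1_k\text{-}\mathrm{KROM}^r$ (resp. $\Pi^1_k\text{-}\mathrm{KROM}^r$) is the set of SO-KROM$^r$ formulas whose second-order prefix starts with an existential (resp. universal) quantifier and has exactly $k-1$ alternations between blocks of existential and universal quantifiers. For logics $\mathcal{L}_1,\mathcal{L}_2$, $\mathcal{L}_1\le\mathcal{L}_2$ means every $\mathcal{L}_1$ formula is equivalent to some $\mathcal{L}_2$ formula over the same vocabulary, and $\mathcal{L}_1\equiv\mathcal{L}_2$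 means both $\mathcal{L}_1\le\mathcal{L}_2$ and $\mathcal{L}_2\le\mathcal{L}_1$. *)

(* Defs.v *)
From mathcomp Require Import all_boot.
Set Implicit Arguments. Unset Strict Implicit. Unset Printing Implicit Defensive.

(* A vocabulary is the list of arities of its relation symbols;
   equality is always available as a built-in atom. *)
Definition vocab := seq nat.

(* First-order literals over vocabulary tau with m first-order variables 'I_m.
   pos = true : atom, pos = false : negated atom. *)
Inductive folit (tau : vocab) (m : nat) : Type :=
  | FRel (pos : bool) (s : 'I_(size tau)) (ys : (nth 0 tau s).-tuple 'I_m)
  | FEq (pos : bool) (x y : 'I_m).

(* Second-order disjuncts H_t; ar is the list of arities of the SO variables
   R_1 ... R_n (in prefix order). *)
Inductive sohead (m : nat) (ar : seq nat) : Type :=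
  | HAtom (pos : bool) (i : 'I_(size ar)) (zs : (nth 0 ar i).-tuple 'I_m)
  | HEx (i : 'I_(size ar))   (* exists z_1 .. z_r, R_i z_1 .. z_r *)
  | HBot.

Record clause (tau : vocab) (m : nat) (ar : seq nat) := Clause {
  cl_lits : seq (folit tau m);
  cl_h1 : sohead m ar;
  cl_h2 : sohead m ar }.

(* An SO-KROM^r(tau) formula:
   Q_1 R_1 ... Q_n R_n  forall x_0 .. x_(nfo-1)  (C_1 /\ ... /\ C_l).
   so_pre lists (Q_i, arity of R_i), with Q_i = true for exists, false for forall. *)
Record sokrom (tau : vocab) := SOKrom {
  so_nfo : nat;
  so_pre : seq (bool * nat);
  so_cls : seq (clause tau so_nfo (map snd so_pre)) }.

Record structure (tau : vocab) := Structure {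
  dom : finType;
  interp : forall s : 'I_(size tau), {set (nth 0 tau s).-tuple dom} }.

(* Assignments of second-order variables: index -> relation, a relation being
   represented by its characteristic function on sequences. *)
Definition soasg (A : finType) := nat -> seq A -> bool.

Definition rel_of (A : finType) (n : nat) (R : {set n.-tuple A}) : seq A -> bool :=
  fun s => [exists t : n.-tuple A, (t \in R) && (tval t == s)].

Section Semantics.
Variables (tau : vocab) (M : structure tau).
Local Notation A := (dom M).

Definition eval_lit (m : nat) (v : 'I_m -> A) (l : folit tau m) : bool :=
  match l with
  | FRel pos s ys => (map_tuple v ys \in interp M s) == pos
  | FEq pos x y => (v x == v y) == pos
  end.

Definition eval_head (m : nat) (ar : seq nat) (sg : soasg A) (v : 'I_m -> A)
    (h : sohead m ar) : bool :=
  match h with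
  | HAtom pos i zs => sg i (map v zs) == pos
  | HEx i => [exists t : (nth 0 ar i).-tuple A, sg i t]
  | HBot => false
  end.

Definition eval_clause (m : nat) (ar : seq nat) (sg : soasg A) (v : 'I_m -> A)
    (c : clause tau m ar) : bool :=
  [|| has (eval_lit v) (cl_lits c), eval_head sg v (cl_h1 c) | eval_head sg v (cl_h2 c)].

(* Evaluate the SO prefix; the k-th quantified variable gets index k. *)
Fixpoint eval_pre (pre : seq (bool * nat)) (k : nat) (sg : soasg A)
    (body : soasg A -> Prop) : Prop :=
  match pre with
  | [::] => body sg
  | (q, n) :: pre' =>
      let upd (R : {set n.-tuple A}) : soasg A :=
        fun j => if j == k then rel_of R else sg j in
      if q then exists R : {set n.-tuple A}, eval_pre pre' k.+1 (upd R) body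
      else forall R : {set n.-tuple A}, eval_pre pre' k.+1 (upd R) body
  end.

Definition sat (phi : sokrom tau) : Prop :=
  eval_pre (so_pre phi) 0 (fun _ _ => false)
    (fun sg => forall v : 'I_(so_nfo phi) -> A,
        all (eval_clause sg v) (so_cls phi)).

End Semantics.

Fixpoint alternations (qs : seq bool) : nat :=
  match qs with
  | q1 :: ((q2 :: _) as qs') => (q1 != q2) + alternations qs'
  | _ => 0
  end.

Definition fragment := forall tau : vocab, sokrom tau -> Prop.

Definition SigmaKrom (k : nat) : fragment := fun tau phi =>
  let qs := map fst (so_pre phi) in
  head false qs = true /\ alternations qs = k.-1.

Definition PiKrom (k : nat) : fragment := fun tau phi =>
  let qs := map fst (so_pre phi) in
  head true qs = false /\ alternations qs = k.-1.

Definition equivalent (tau : vocab) (phi psi : sokrom tau) : Prop :=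
  forall M : structure tau, 0 < #|dom M| -> (sat M phi <-> sat M psi).

Definition frag_le (L1 L2 : fragment) : Prop :=
  forall (tau : vocab) (phi : sokrom tau), L1 tau phi ->
    exists psi : sokrom tau, L2 tau psi /\ equivalent phi psi.

Definition frag_equiv (L1 L2 : fragment) : Prop := frag_le L1 L2 /\ frag_le L2 L1.

(* Main.v *)
Require Import Defs.
From mathcomp Require Import all_boot.
Set Implicit Arguments. Unset Strict Implicit. Unset Printing Implicit Defensive.

Definition hidx m ar (h : sohead m ar) : option nat :=
  match h with HAtom _ i _ => Some (nat_of_ord i) | HEx i => Some (nat_of_ord i) | HBot => None end.

Definition cast_head m ar ar2 (h : sohead m ar) : sohead m ar2 :=
  match h with
  | HAtom p i zs =>
      match (insub (nat_of_ord i) : option 'I_(size ar2)) with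
      | Some i2 => match (insub (tval zs) : option ((nth 0 ar2 i2).-tuple 'I_m)) with
                   | Some t => @HAtom m ar2 p i2 t
                   | None => HBot _ _ end
      | None => HBot _ _ end
  | HEx i =>
      match (insub (nat_of_ord i) : option 'I_(size ar2)) with
      | Some i2 => @HEx m ar2 i2
      | None => HBot _ _ end
  | HBot => HBot _ _
  end.

Lemma exists_tuple_eq (A : finType) a b (f : seq A -> bool) : a = b ->
  [exists t : a.-tuple A, f t] = [exists t : b.-tuple A, f t].
Proof. by move->. Qed.


Lemma cast_headE tau (M : structure tau) m ar ar2 (sg : soasg (dom M)) (v : 'I_m -> dom M) (h : sohead m ar) :
  (forall i, hidx h = Some i -> i < size ar2 /\ nth 0 ar2 i = nth 0 ar i) ->
  eval_head sg v (cast_head ar2 h) = eval_head sg v h.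
Proof.
case: h => [p i zs|i|] //= H; have [lt eq] := H _ erefl.
- case: insubP => [i2 _ Ei2|]; last by rewrite lt.
  case: insubP => [t _ Et|]; last by rewrite size_tuple Ei2 eq eqxx.
  have E1 : nat_of_ord i2 = i := Ei2. have E2 : tval t = tval zs := Et.
  by rewrite /= E2 E1.
- case: insubP => [i2 _ Ei2|]; last by rewrite lt.
  have E1 : nat_of_ord i2 = i := Ei2.
  rewrite /=; transitivity [exists t : (nth 0 ar2 i2).-tuple (dom M), sg i t].
    by apply: eq_existsb => t; rewrite [in sg _]E1.
  by apply: exists_tuple_eq; rewrite E1 eq.
Qed.

Lemma eval_pre_ext tau (M : structure tau) pre k (sg : soasg (dom M)) (b1 b2 : soasg (dom M) -> Prop) :
  (forall s, b1 s <-> b2 s) -> (eval_pre pre k sg b1 <-> eval_pre pre k sg b2).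
Proof.
elim: pre k sg => [|[q n] pre IH] k sg H /=; first exact: H.
case: q.
- by split=> -[R HR]; exists R; apply/(IH _ _ H).
- by split=> HR R; apply/(IH _ _ H).
Qed.

Lemma eval_pre_rcons tau (M : structure tau) pre q n k (sg : soasg (dom M)) body :
  eval_pre (rcons pre (q, n)) k sg body <->
  eval_pre pre k sg (fun s : soasg (dom M) =>
    if q then exists R : {set n.-tuple (dom M)}, body (fun j => if j == k + size pre then rel_of R else s j)
    else forall R : {set n.-tuple (dom M)}, body (fun j => if j == k + size pre then rel_of R else s j)).
Proof.
elim: pre k sg => [|[q' n'] pre IH] k sg /=; first by rewrite addn0.
rewrite -addSnnS.
case: q'.
- by split=> -[R HR]; exists R; apply/IH; apply: HR.
- by split=> HR R; apply/IH; apply: HR.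
Qed.

Lemma alt_odd q qs : odd (alternations (q :: qs)) = (q != last q qs).
Proof.
elim: qs q => [|q2 qs IH] q //=; first by case: q.
by rewrite oddD IH; case: q; case: q2; case: (last _ _).
Qed.

Lemma altE q q2 r : alternations (q :: q2 :: r) = (q != q2) + alternations (q2 :: r).
Proof. by []. Qed.

Lemma alt_rcons q qs b :
  alternations (rcons (q :: qs) b) = alternations (q :: qs) + (last q qs != b).
Proof.
elim: qs q => [|q2 qs IH] q; first by rewrite /= addn0.
by rewrite rcons_cons (rcons_cons q2) altE -(rcons_cons q2) IH altE addnA.
Qed.

Definition upd (A : finType) n (s : soasg A) N (R : {set n.-tuple A}) : soasg A :=
  fun j => if j == N then rel_of R else s j.

Lemma rel_of_tuple (A : finType) n (R : {set n.-tuple A}) (t : n.-tuple A) :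
  rel_of R t = (t \in R).
Proof.
apply/existsP/idP => [[t' /andP[Ht' /eqP E]]|Ht]; last by exists t; rewrite Ht eqxx.
by have <- : t' = t by apply: val_inj.
Qed.

Lemma rel_of0 (A : finType) n (s : seq A) : rel_of (set0 : {set n.-tuple A}) s = false.
Proof. by apply/existsP => -[t]; rewrite in_set0. Qed.

Lemma rel_ofT (A : finType) n (s : seq A) :
  rel_of (setT : {set n.-tuple A}) s = (size s == n).
Proof.
apply/existsP/idP => [[t /andP[_ /eqP <-]]|/eqP Hs]; first by rewrite size_tuple.
by exists (Tuple (introT eqP Hs)); rewrite in_setT eqxx.
Qed.

Lemma rel_of1 (A : finType) n (t : n.-tuple A) (s : seq A) :
  rel_of [set t] s = (tval t == s).
Proof.
apply/existsP/idP => [[t' /andP[/set1P -> //]]|Hs]; by exists t; rewrite set11.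
Qed.

Lemma hidx_lt m ar (h : sohead m ar) i : hidx h = Some i -> i < size ar.
Proof. by case: h => [p j z|j|] //= [<-]. Qed.

Lemma eval_head_upd tau (M : structure tau) m ar n (s : soasg (dom M)) N
    (R : {set n.-tuple (dom M)}) (v : 'I_m -> dom M) (h : sohead m ar) :
  hidx h != Some N -> eval_head (upd s N R) v h = eval_head s v h.
Proof.
case: h => [p i z|i|] //= Hi; have Hi' : (nat_of_ord i == N) = false.
- by apply/negbTE; apply: contra Hi => /eqP ->.
- by rewrite /upd Hi'.
- by apply/negbTE; apply: contra Hi => /eqP ->.
- by apply: eq_existsb => t; rewrite /upd Hi'.
Qed.

Definition lift_clause tau m ar ar2 (c : clause tau m ar) : clause tau m ar2 :=
  Clause (cl_lits c) (cast_head ar2 (cl_h1 c)) (cast_head ar2 (cl_h2 c)).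

Definition append_forall tau (phi : sokrom tau) : sokrom tau :=
  @SOKrom tau (so_nfo phi) (rcons (so_pre phi) (false, 0))
    (map (lift_clause _) (so_cls phi)).

Lemma hidx_cast m ar ar2 (h : sohead m ar) :
  hidx (cast_head ar2 h) = None \/ hidx (cast_head ar2 h) = hidx h.
Proof.
case: h => [p i z|i|] /=; last by left.
- case: insubP => [i2 _ Ei2|]; last by left.
  case: insubP => [t _ Et|]; last by left.
  by right; rewrite /= -Ei2.
- case: insubP => [i2 _ Ei2|]; last by left.
  by right; rewrite /= -Ei2.
Qed.

Lemma eval_lift tau (M : structure tau) m pre n (s : soasg (dom M)) (R : {set n.-tuple (dom M)})
   (v : 'I_m -> dom M) (c : clause tau m (map snd pre)) :
  eval_clause (upd s (size pre) R) v (lift_clause (map snd (rcons pre (false, n))) c)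
  = eval_clause s v c.
Proof.
have key : forall h : sohead m (map snd pre),
    eval_head (upd s (size pre) R) v (cast_head (map snd (rcons pre (false, n))) h)
    = eval_head s v h.
  move=> h; rewrite eval_head_upd; last first.
    case: (hidx_cast (map snd (rcons pre (false, n))) h) => ->//.
    case E: (hidx h) => [i|] //; apply/eqP => -[Ei].
    by have := hidx_lt E; rewrite size_map Ei ltnn.
  apply: cast_headE => i /hidx_lt; rewrite !size_map size_rcons => lti.
  rewrite map_rcons nth_rcons size_map lti; split=> //; exact: (ltn_trans lti).
by rewrite /eval_clause /lift_clause /= !key.
Qed.

Lemma append_forallP tau (M : structure tau) (phi : sokrom tau) :
  sat M phi <-> sat M (append_forall phi).
Proof.
case: phi => m pre cls; rewrite /sat /append_forall /=.
apply: iff_sym; apply: iff_trans (eval_pre_rcons _ _ _ _ _ _) _.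
apply: eval_pre_ext => s /=; rewrite add0n.
split=> [H v|H R v].
- have := H set0 v; rewrite all_map => H'.
  by apply: sub_all H' => c /=; rewrite eval_lift.
- by rewrite all_map; apply: sub_all (H v) => c /=; rewrite eval_lift.
Qed.

Lemma all_flatten' T (P : pred T) (L : seq (seq T)) : all P (flatten L) = all (all P) L.
Proof. by elim: L => //= s L IH; rewrite all_cat IH. Qed.

Definition neg_inv m ar N (h : sohead m ar) : bool :=
  match h with HAtom false i _ => nat_of_ord i == N | _ => false end.
Definition posex_inv m ar N (h : sohead m ar) : bool :=
  match h with HAtom true i _ => nat_of_ord i == N | HEx i => nat_of_ord i == N | _ => false end.
Definition down m ar ar2 N (h : sohead m ar) : sohead m ar2 :=
  if hidx h == Some N then HBot m ar2 else cast_head ar2 h.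
Definition special m ar N (h1 h2 : sohead m ar) :=
  (neg_inv N h1 && posex_inv N h2) || (posex_inv N h1 && neg_inv N h2).
Definition elim_clause tau m ar ar2 N (c : clause tau m ar) : seq (clause tau m ar2) :=
  let ls := cl_lits c in
  if special N (cl_h1 c) (cl_h2 c) then
    match cl_h1 c, cl_h2 c with
    | HAtom _ _ z1, HAtom _ _ z2 =>
        [seq Clause (@FEq tau m true a.1 a.2 :: ls) (HBot m ar2) (HBot m ar2) | a <- zip (tval z1) (tval z2)]
    | _, _ => [::]
    end
  else [:: Clause ls (down ar2 N (cl_h1 c)) (down ar2 N (cl_h2 c))].

Definition R0 (A : finType) n m ar N (h o : sohead m ar) : {set n.-tuple A} :=
  if neg_inv N h || neg_inv N o then setT else set0.

Lemma ex_rel (A : finType) n a (R : {set n.-tuple A}) : a = n ->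
  [exists t : a.-tuple A, rel_of R t] = [exists t : n.-tuple A, t \in R].
Proof. by move->; apply: eq_existsb => t; rewrite rel_of_tuple. Qed.

Lemma zip_all (A : finType) m (v : 'I_m -> A) L (s1 s2 : seq 'I_m) : size s1 = size s2 ->
  all (fun a => (v a.1 == v a.2) || L) (zip s1 s2) = L || (map v s1 == map v s2).
Proof.
elim: s1 s2 => [|x s1 IH] [|y s2] //=; first by rewrite orbT.
case=> /IH ->.
by clear IH; rewrite eqseq_cons; case: L; rewrite ?orbT ?andbT ?orbF //=.
Qed.

Lemma atoms_special (A : finType) n (x y : seq A) p1 p2 L :
  size x = n -> size y = n -> p1 != p2 ->
  (forall R : {set n.-tuple A}, [|| L, rel_of R x == p1 | rel_of R y == p2]) <-> L || (x == y).
Proof.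
move=> sx sy hp; split=> [H|H R].
- case: L H => //= H.
  case: p1 p2 hp H => -[] //= _ H.
  + have := H [set Tuple (introT eqP sy)]; rewrite !rel_of1 /= eqxx orbF ?eqb_id => /eqP ->; exact: eqxx.
  + have := H [set Tuple (introT eqP sx)]; rewrite !rel_of1 /= eqxx /= eqb_id.
    by [].
- case/orP: H => [->//|/eqP <-].
  by case: p1 p2 hp => -[] //= _; case: (rel_of R x); rewrite orbT.
Qed.

Lemma elim_clauseP tau (M : structure tau) m ar ar2 N n
  (Hok : forall i, i < size ar -> i != N -> i < size ar2 /\ nth 0 ar2 i = nth 0 ar i)
  (HN : nth 0 ar N = n) (s : soasg (dom M)) (c : clause tau m ar) :
  (forall (R : {set n.-tuple (dom M)}) v, eval_clause (upd s N R) v c) <->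
  (forall v, all (eval_clause s v) (elim_clause ar2 N c)).
Proof.
have down_eval : forall (R : {set n.-tuple (dom M)}) (v : 'I_m -> dom M) (h : sohead m ar), hidx h != Some N ->
    eval_head (upd s N R) v h = eval_head s v (down ar2 N h).
  move=> R v h Hh; rewrite eval_head_upd // /down (negbTE Hh) cast_headE //.
  move=> i Ei; apply: Hok; first exact: hidx_lt Ei.
  by apply: contra Hh => /eqP <-; rewrite Ei.
have down_imp : forall (R : {set n.-tuple (dom M)}) (v : 'I_m -> dom M) (h : sohead m ar),
    eval_head s v (down ar2 N h) -> eval_head (upd s N R) v h.
  move=> R v h; case E: (hidx h == Some N); first by rewrite /down E.
  by rewrite down_eval ?E.
have szN : forall (i : 'I_(size ar)) (z : (nth 0 ar i).-tuple 'I_m) (v : 'I_m -> dom M),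
    nat_of_ord i == N -> size (map v z) = n.
  by move=> i z v /eqP Ei; rewrite size_map size_tuple Ei HN.
have head_R0 : forall (v : 'I_m -> dom M) (h o : sohead m ar), ~~ special N h o ->
    eval_head (upd s N (R0 (dom M) n N h o)) v h = eval_head s v (down ar2 N h).
  move=> v h o Hsp; case E: (hidx h == Some N); last by rewrite down_eval ?E.
  rewrite /down E /=; move: E Hsp; rewrite /special /R0.
  case: h => [p i z|i|] //= /eqP [/eqP Ei]; rewrite /upd Ei.
  - case: p => /=; rewrite ?orbF ?andbT.
    + by move=> /negbTE ->; rewrite /= rel_of0.
    + by move=> _; rewrite rel_ofT (szN _ _ _ Ei) eqxx.
  - rewrite /= => /negbTE ->.
    by apply/existsP => -[t]; rewrite rel_of0.
case: c => ls h1 h2; rewrite /elim_clause /=.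
case: ifP => Hs.
- move: Hs; rewrite /special.
  case: h1 => [p1 i1 z1|i1|]; case: h2 => [p2 i2 z2|i2|] //=; rewrite ?andbF ?orbF //.
  + move=> Hs.
    have [Ei1 Ei2 hp] : [/\ nat_of_ord i1 == N, nat_of_ord i2 == N & p1 != p2].
      by case: p1 p2 Hs => -[] //=; rewrite ?andbF ?orbF // => /andP[-> ->].
    rewrite /eval_clause /= /upd Ei1 Ei2.
    split=> [H v|H R v].
    * rewrite all_map /=.
      have -> : all (fun a : 'I_m * 'I_m => [|| has (eval_lit v) ((@FEq tau m true a.1 a.2) :: ls), false | false]) (zip z1 z2)
          = all (fun a : 'I_m * 'I_m => (v a.1 == v a.2) || has (eval_lit v) ls) (zip z1 z2).
        by apply: eq_all => a /=; rewrite !orbF eqb_id.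
      rewrite zip_all; last by rewrite !size_tuple (eqP Ei1) (eqP Ei2).
      by apply: (atoms_special _ (szN _ _ _ Ei1) (szN _ _ _ Ei2) hp).1 => R; apply: H.
    * move: R; apply: (atoms_special _ (szN _ _ _ Ei1) (szN _ _ _ Ei2) hp).2.
      have := H v; rewrite all_map.
      have -> : all (fun a : 'I_m * 'I_m => eval_clause s v (Clause (@FEq tau m true a.1 a.2 :: ls) (HBot m ar2) (HBot m ar2))) (zip z1 z2)
          = all (fun a : 'I_m * 'I_m => (v a.1 == v a.2) || has (eval_lit v) ls) (zip z1 z2).
        by apply: eq_all => a /=; rewrite /eval_clause /= !orbF eqb_id.
      by rewrite zip_all // !size_tuple (eqP Ei1) (eqP Ei2).
  + case: p1 => //= /andP[Ei1 Ei2]; split=> // _ R v.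
    rewrite /eval_clause /= /upd Ei1 Ei2.
    case Hr: (rel_of R (map v z1)); rewrite ?orbT //=.
    rewrite (ex_rel _ (etrans (f_equal (nth 0 ar) (eqP Ei2)) HN)).
    case/existsP: Hr => t /andP[Ht _]; apply/orP; right.
    by apply/existsP; exists t.
  + case: p2 => /=; first by rewrite andbF.
    move=> /andP[Ei1 Ei2]; split=> // _ R v.
    rewrite /eval_clause /= /upd Ei1 Ei2.
    case Hr: (rel_of R (map v z2)); rewrite ?orbT //=.
    rewrite (ex_rel _ (etrans (f_equal (nth 0 ar) (eqP Ei1)) HN)).
    case/existsP: Hr => t /andP[Ht _]; apply/orP; right; apply/orP; left.
    by apply/existsP; exists t.
- have Hs' : ~~ special N h2 h1.
    by move: Hs; rewrite /special; case: (neg_inv N h1); case: (neg_inv N h2);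
      case: (posex_inv N h1); case: (posex_inv N h2).
  split=> [H v|H R v].
  + rewrite /= andbT; have := H (R0 (dom M) n N h1 h2) v.
    rewrite /eval_clause /= (head_R0 v h1 h2) ?Hs //.
    have -> : R0 (dom M) n N h1 h2 = R0 (dom M) n N h2 h1 by rewrite /R0 orbC.
    by rewrite (head_R0 v h2 h1).
  + have := H v; rewrite /= andbT /eval_clause /=.
    case/or3P => [->//|/down_imp ->|/down_imp ->]; by rewrite ?orbT.
Qed.

Definition elim_last tau m pre n (cls : seq (clause tau m (map snd (rcons pre (false, n))))) :
  sokrom tau :=
  @SOKrom tau m pre (flatten (map (elim_clause (map snd pre) (size pre)) cls)).

Lemma elim_lastP tau (M : structure tau) m pre n
    (cls : seq (clause tau m (map snd (rcons pre (false, n))))) :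
  sat M (@SOKrom tau m (rcons pre (false, n)) cls) <-> sat M (elim_last cls).
Proof.
rewrite /sat /=. apply: iff_trans (eval_pre_rcons _ _ _ _ _ _) _.
apply: eval_pre_ext => s; rewrite add0n.
have Hok : forall i, i < size (map snd (rcons pre (false, n))) -> i != size pre ->
    i < size (map snd pre) /\ nth 0 (map snd pre) i = nth 0 (map snd (rcons pre (false, n))) i.
  move=> i; rewrite !size_map size_rcons ltnS leq_eqVlt => /orP[/eqP->|lt]; first by rewrite eqxx.
  by move=> _; rewrite map_rcons nth_rcons size_map lt.
have HN : nth 0 (map snd (rcons pre (false, n))) (size pre) = n.
  by rewrite map_rcons nth_rcons size_map ltnn eqxx.
elim: cls => [|c cls IHc] /=; first by split.
have Hc := elim_clauseP Hok HN s c.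
split=> [H v|H R v].
- rewrite all_cat; apply/andP; split.
  + by apply: Hc.1 => R v'; case/andP: (H R v').
  + by apply: IHc.1 => R v'; case/andP: (H R v').
- apply/andP; split.
  + by apply: Hc.2 => v'; have := H v'; rewrite all_cat => /andP[].
  + by apply: IHc.2 => v'; have := H v'; rewrite all_cat => /andP[].
Qed.

Definition qs tau (phi : sokrom tau) := map fst (so_pre phi).

Lemma elim_block tau len (phi : sokrom tau) :
  size (so_pre phi) <= len -> 0 < alternations (qs phi) -> last true (qs phi) = false ->
  exists psi : sokrom tau, (forall b, head b (qs psi) = head b (qs phi)) /\
    alternations (qs psi) = (alternations (qs phi)).-1 /\
    forall M, sat M phi <-> sat M psi.
Proof.
elim: len phi => [|len IH] [m pre cls]; rewrite /qs /=.
  by case: pre cls.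
move: cls; case/lastP: pre => [//|pre' [q n]] cls.
rewrite size_rcons ltnS map_rcons last_rcons /= => Hsz Halt Hq.
move: cls Halt; rewrite Hq => cls Halt.
case: pre' cls Halt Hsz => [|p0 pre''] cls Halt Hsz; first by [].
move: Halt; rewrite alt_rcons => Halt.
case El: (last p0.1 (map fst pre'')).
- exists (elim_last cls); rewrite /qs /= addn1 /=; split=> //; split=> //.
  by move=> M; exact: (elim_lastP M cls).
- rewrite El addn0 in Halt.
  have [psi [Hh [Ha Hs]]] := IH (elim_last cls) Hsz Halt El.
  exists psi; split; first by move=> b; rewrite Hh.
  split; first by rewrite addn0; exact: Ha.
  by move=> M; apply: iff_trans (elim_lastP M cls) (Hs M).
Qed.

Lemma easy_dir tau (phi : sokrom tau) :
  qs phi != [::] -> last true (qs phi) = true ->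
  exists psi : sokrom tau, (forall b, head b (qs psi) = head b (qs phi)) /\
    alternations (qs psi) = (alternations (qs phi)).+1 /\
    forall M, sat M phi <-> sat M psi.
Proof.
move=> Hne Hl; exists (append_forall phi); split; last split.
- move=> b; rewrite /qs /= map_rcons; move: Hne; rewrite /qs.
  by case: [seq x.1 | x <- so_pre phi].
- rewrite /qs /= map_rcons; move: Hne Hl; rewrite /qs.
  case: [seq x.1 | x <- so_pre phi] => [//|q r] _ Hl; have Hl2 : last q r = true := Hl; by rewrite alt_rcons Hl2 addn1.
- by move=> M; apply: append_forallP.
Qed.

Lemma frag_gen (b : bool) k : 1 <= k -> odd k = b ->
  frag_equiv (fun tau phi => head (~~ b) (qs phi) = b /\ alternations (qs phi) = k.-1)
             (fun tau phi => head (~~ b) (qs phi) = b /\ alternations (qs phi) = k.+1.-1).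
Proof.
move=> k1 Hk; split=> tau phi [Hh Ha].
- have Hne : qs phi != [::] by case: (qs phi) Hh => //=; case: (b).
  have Hl : last true (qs phi) = true.
    move: Hh Ha; case: (qs phi) => [|q r] // Hq Ha; have {}Hq : q = b := Hq; subst q.
    have := alt_odd b r; rewrite Ha.
    case: k k1 Hk {Ha} => // k _ /= <-; case: (odd k); case: (last _ _) => //.
  have [psi [Hh' [Ha' Hs]]] := easy_dir Hne Hl.
  exists psi; split; first by rewrite Hh' Ha' Ha prednK.
  by move=> M _; apply: Hs.
- have Hl : last true (qs phi) = false.
    move: Hh Ha; case: (qs phi) => [|q r]; first by case: (b).
    move=> Hq Ha; have {}Hq : q = b := Hq; subst q; have := alt_odd b r; rewrite Ha /= Hk.
    by rewrite /=; case: (b); case: (last _ r).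
  have Hpos : 0 < alternations (qs phi) by rewrite Ha.
  have [psi [Hh' [Ha' Hs]]] := elim_block (leqnn _) Hpos Hl.
  exists psi; split; first by rewrite Hh' Ha' Ha.
  by move=> M _; apply: Hs.
Qed.

Theorem corollary2p2 (k : nat) : 1 <= k ->
  (odd k -> frag_equiv (SigmaKrom k) (SigmaKrom k.+1)) /\
  (~~ odd k -> frag_equiv (PiKrom k) (PiKrom k.+1)).
Proof.
move=> k1; split=> Hk.
- exact: (@frag_gen true k k1 Hk).
- exact: (@frag_gen false k k1 (negbTE Hk)).
Qed.
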